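(* For all integers $n > 2$, $\det'(K_n) = \left\lfloor \frac{2n}{3} \right\rfloor$.
   Context: $K_n$ is the complete graph on $n$ vertices. For a graph $G$ with at most one isolated vertex and no component isomorphic to $K_2$, an edge subset $T$ is an edge determining set if the only automorphism $\phi$ of $G$ satisfying $\{\phi(u),\phi(v)\}=\{u,v\}$ for all $\{u,v\}\in T$ is the identity; the determining index $\det'(G)$ is the minimum size of an edge determining set. *)

(* Defs.v *)
From mathcomp Require Import all_boot all_fingroup.
Set Implicit Arguments. Unset Strict Implicit. Unset Printing Implicit Defensive.

(* A simple graph on a finite vertex type V is given by an adjacency relation
   e : rel V (assumed symmetric and irreflexive where relevant). *)

Definition edges (V : finType) (e : rel V) : {set {set V}} :=
  [set E : {set V} | [exists u, exists v, (u != v) && e u v && (E == [set u; v])]].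



Definition edge_determiningb (V : finType) (e : rel V) (T : {set {set V}}) : bool :=
  (T \subset edges e) &&
  [forall phi : {perm V},
     ([forall u, forall v, e (phi u) (phi v) == e u v] &&
      [forall u, forall v, ([set u; v] \in T) ==> ([set phi u; phi v] == [set u; v])])
     ==> (phi == 1%g)].

(* Determining index det'(G): minimum size of an edge determining set.
   (The default value #|edges e| is only reached if no edge determining set
   exists, which does not happen for the graphs considered by the paper.) *)
Definition det_index (V : finType) (e : rel V) : nat :=
  \big[minn/#|edges e|]_(T : {set {set V}} | edge_determiningb e T) #|T|.

Definition complete_rel (n : nat) : rel 'I_n := fun i j => i != j.

(* Main.v *)
Require Import Defs.
From mathcomp Require Import all_boot all_fingroup.
From mathcomp Require Import zify.
Set Implicit Arguments. Unset Strict Implicit. Unset Printing Implicit Defensive.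

Section Gen.
Variable V : finType.

Lemma set2_img (phi : {perm V}) (a b : V) :
  [set phi x | x in [set a; b]] = [set phi a; phi b].
Proof. by rewrite imsetU1 imset_set1. Qed.

Lemma detP (n : nat) (T : {set {set 'I_n}}) (phi : {perm 'I_n}) :
  edge_determiningb (@complete_rel n) T ->
  (forall u v, [set u; v] \in T -> [set phi u; phi v] = [set u; v]) ->
  phi = 1%g.
Proof.
move=> /andP[_ /forallP /(_ phi) /implyP H] Hc; apply/eqP; apply: H.
apply/andP; split; apply/forallP => u; apply/forallP => v.
  by rewrite /complete_rel (inj_eq (@perm_inj _ phi)).
by apply/implyP => /Hc ->.
Qed.

Lemma fix_mid (phi : {perm V}) (x a b : V) :
  a != b -> [set phi x; phi a] = [set x; a] -> [set phi x; phi b] = [set x; b] ->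
  phi x = x.
Proof.
move=> nab Ha Hb.
have h1 : phi x \in [set x; a] by rewrite -Ha !inE eqxx.
have h2 : phi x \in [set x; b] by rewrite -Hb !inE eqxx.
move: h1 h2; rewrite !inE => /orP[/eqP//|/eqP ->] /orP[/eqP//|/eqP eab].
by rewrite eab eqxx in nab.
Qed.

Lemma fix_nb (phi : {perm V}) (x y : V) :
  x != y -> phi y = y -> [set phi x; phi y] = [set x; y] -> phi x = x.
Proof.
move=> nxy Hy Hxy.
have : phi x \in [set x; y] by rewrite -Hxy !inE eqxx.
rewrite !inE => /orP[/eqP//|/eqP e].
by rewrite -Hy in e; move/perm_inj: e => e; rewrite e eqxx in nxy.
Qed.
End Gen.

Section Lower.
Variable n : nat.
Variable T : {set {set 'I_n}}.
Hypothesis HT : edge_determiningb (@complete_rel n) T.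

Definition deg (v : 'I_n) := #|[set E in T | v \in E]|.

Lemma degE v : deg v = \sum_(E in T) (v \in E).
Proof.
rewrite /deg -sum1_card big_mkcond /=.
rewrite [RHS]big_mkcond /=; apply: eq_bigr => E _.
by rewrite inE; case: (E \in T); case: (v \in E).
Qed.

Lemma dcount (A : {set 'I_n}) : \sum_(v in A) deg v = \sum_(E in T) #|E :&: A|.
Proof.
under eq_bigr do rewrite degE.
rewrite exchange_big /=; apply: eq_bigr => E _.
rewrite -sum1_card [LHS]big_mkcond /= [RHS]big_mkcond /=.
by apply: eq_bigr => v _; rewrite inE andbC; case: (v \in E); case: (v \in A).
Qed.

Lemma Tsub : T \subset edges (@complete_rel n).
Proof. by case/andP: HT. Qed.

Lemma Tedge E : E \in T -> exists a b, a != b /\ E = [set a; b].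
Proof.
move=> /(subsetP Tsub); rewrite inE => /existsP[a /existsP[b /andP[/andP[nab _] /eqP ->]]].
by exists a, b.
Qed.

Lemma handshake : \sum_v deg v = 2 * #|T|.
Proof.
have -> : \sum_v deg v = \sum_(v in [set: 'I_n]) deg v by apply: eq_bigl => v; rewrite inE.
rewrite dcount -sum1_card big_distrr /=; apply: eq_bigr => E /Tedge[a [b [nab ->]]].
by rewrite setIT cards2 nab.
Qed.

Lemma deg1_uniq x E F : deg x = 1 -> E \in T -> F \in T -> x \in E -> x \in F -> E = F.
Proof.
move=> /eqP; rewrite eqn_leq => /andP[/card_le1_eqP H _] ET FT xE xF.
by apply: H; rewrite inE ?ET ?FT.
Qed.

Definition L := [set v | deg v == 1].

Lemma leafE E : E \in T -> #|E :&: L| <= 1.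
Proof.
move=> ET; have [a [b [nab EE]]] := Tedge ET.
case La: (a \in L); last first.
  apply: leq_trans (_ : #|[set b]| <= 1); last by rewrite cards1.
  apply: subset_leq_card; apply/subsetP => x; rewrite EE in_setI in_set2 in_set1.
  by case/andP => /orP[/eqP ->|//]; rewrite La.
case Lb: (b \in L); last first.
  apply: leq_trans (_ : #|[set a]| <= 1); last by rewrite cards1.
  apply: subset_leq_card; apply/subsetP => x; rewrite EE in_setI in_set2 in_set1.
  by case/andP => /orP[//|/eqP ->]; rewrite Lb.
exfalso.
move: La Lb; rewrite !inE => /eqP da /eqP db.
have := detP (phi:=tperm a b) HT.
have: tperm a b = 1%g -> False.
  by move=> /permP /(_ a); rewrite tpermL perm1 => e; rewrite e eqxx in nab.
move=> H1 H2; apply: H1; apply: H2 => u v uvT.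
have uE : u \in [set u; v] by rewrite !inE eqxx.
have vE : v \in [set u; v] by rewrite !inE eqxx orbT.
have aE : a \in E by rewrite EE !inE eqxx.
have bE : b \in E by rewrite EE !inE eqxx orbT.
case: (boolP ((u == a) || (u == b) || (v == a) || (v == b))) => [H|H].
  have Heq : [set u; v] = E.
    by move: H => /orP[/orP[/orP[]|]|] /eqP e; subst;
      [apply: (deg1_uniq da) | apply: (deg1_uniq db) | apply: (deg1_uniq da)
      | apply: (deg1_uniq db)].
  by rewrite -set2_img Heq EE set2_img tpermL tpermR setUC.
move: H; rewrite !negb_or => /andP[/andP[/andP[ua ub] va] vb].
by rewrite !tpermD // eq_sym.
Qed.

Lemma uncov : #|[set v | deg v == 0]| <= 1.
Proof.
apply/card_le1_eqP => u v; rewrite !inE => /eqP du /eqP dv.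
apply/eqP/negP => /negP nuv.
have := detP (phi:=tperm u v) HT.
have: tperm u v = 1%g -> False.
  by move=> /permP /(_ u); rewrite tpermL perm1 => e; rewrite e eqxx in nuv.
move=> H1 H2; apply: H1; apply: H2 => x y xyT.
have cov z : z \in [set x; y] -> deg z != 0.
  move=> zE; rewrite /deg -lt0n card_gt0; apply/set0Pn; exists [set x; y].
  by rewrite inE xyT.
have hx : x \in [set x; y] by rewrite !inE eqxx.
have hy : y \in [set x; y] by rewrite !inE eqxx orbT.
have nz w : deg w == 0 -> w != x /\ w != y.
  move=> /eqP dw; split; apply/eqP => e; subst.
    by have := cov _ hx; rewrite dw.
  by have := cov _ hy; rewrite dw.
have [ux uy] := nz u (introT eqP du).
have [vx vy] := nz v (introT eqP dv).
by rewrite !tpermD.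
Qed.

Lemma lower : 2 * n <= 3 * #|T| + 2.
Proof.
have h1 : \sum_(v in L) deg v <= #|T|.
  rewrite dcount -sum1_card; apply: leq_sum => E ET; exact: leafE.
have h2 : \sum_(v in L) deg v = #|L|.
  by rewrite -sum1_card; apply: eq_bigr => v; rewrite inE => /eqP.
have h3 : \sum_v 2 * (deg v != 0) <= \sum_v deg v + \sum_(v in L) deg v.
  rewrite [X in _ + X]big_mkcond /= -big_split /=; apply: leq_sum => v _.
  rewrite inE; case: (deg v) => [|[|k]] //=.
have h4 : \sum_v 2 * (deg v != 0) = 2 * #|[set v | deg v != 0]|.
  rewrite -big_distrr /=; congr (2 * _); rewrite -sum1_card [RHS]big_mkcond /=.
  by apply: eq_bigr => v _; rewrite inE; case: (deg v != 0).
have h5 : #|[set v | deg v != 0]| + #|[set v | deg v == 0]| = n.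
  rewrite -[RHS]card_ord -(cardsC [set v | deg v != 0]); congr (_ + _).
  by apply: eq_card => v; rewrite !inE negbK.
have := uncov; rewrite handshake in h3; lia.
Qed.
End Lower.


Section Upper.
Variable n' : nat.
Local Notation N := n'.+1.
Hypothesis HN : 2 < N.

Definition m := (2 * N) %/ 3.
Definition aa j := if (j.+1 == m) && (N %% 3 == 2) then N - 3 else 3 * (j %/ 2) + j %% 2.
Definition g x : 'I_N := inord x.
Definition f j := [set g (aa j); g (aa j).+1].
Definition T0 := [set f (nat_of_ord j) | j : 'I_m].

Lemma aa_lt j : j < m -> (aa j).+1 < N.
Proof. rewrite /aa /m; case: ifP => /= _; lia. Qed.

Lemma g_neq x y : x < N -> y < N -> x != y -> g x != g y.
Proof.
move=> xN yN; apply: contra => /eqP e; apply/eqP.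
by have := congr1 (@nat_of_ord N) e; rewrite /g !inordK.
Qed.

Lemma T0_sub : T0 \subset edges (@complete_rel N).
Proof.
apply/subsetP => E /imsetP[j _ ->]; rewrite inE.
have h := aa_lt (ltn_ord j).
apply/existsP; exists (g (aa j)); apply/existsP; exists (g (aa j).+1).
have ne : g (aa j) != g (aa j).+1 by apply: g_neq => //; [lia | lia].
by rewrite ne /complete_rel ne eqxx.
Qed.

Variable phi : {perm 'I_N}.
Hypothesis Hc : forall u v, [set u; v] \in T0 -> [set phi u; phi v] = [set u; v].

Lemma Pj j : j < m -> [set phi (g (aa j)); phi (g (aa j).+1)] = [set g (aa j); g (aa j).+1].
Proof. by move=> jm; apply: Hc; apply/imsetP; exists (Ordinal jm). Qed.

Lemma Px x : (exists j, j < m /\ aa j = x) ->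
  [set phi (g x); phi (g x.+1)] = [set g x; g x.+1].
Proof. by case=> j [jm <-]; apply: Pj. Qed.

Lemma Px2 x j : j < m -> aa j = x ->
  [set phi (g x); phi (g x.+1)] = [set g x; g x.+1].
Proof. by move=> jm <-; apply: Pj. Qed.

Ltac aat := rewrite /aa /m; case: ifP => [/andP[/eqP ? /eqP ?]|_]; lia.

Lemma sw (x y : 'I_N) : [set phi x; phi y] = [set x; y] -> [set phi y; phi x] = [set y; x].
Proof. by rewrite setUC [[set y; x]]setUC. Qed.

Lemma stepA q : 3 * q + 2 < N -> phi (g (3 * q + 1)) = g (3 * q + 1).
Proof.
move=> h.
have h0 := @Px2 (3 * q) (2 * q) ltac:(rewrite /m; lia) ltac:(aat).
have h1 := @Px2 (3 * q + 1) (2 * q + 1) ltac:(rewrite /m; lia) ltac:(aat).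
apply: (@fix_mid _ _ _ (g (3 * q)) (g (3 * q + 2))).
- by apply: g_neq; lia.
- by rewrite sw // addn1.
- have e : (3 * q + 1).+1 = 3 * q + 2 by lia. by rewrite e in h1.
Qed.

Lemma stepB q : 3 * q + 2 < N -> phi (g (3 * q + 2)) = g (3 * q + 2).
Proof.
move=> h.
have h1 := @Px2 (3 * q + 1) (2 * q + 1) ltac:(rewrite /m; lia) ltac:(aat).
apply: (@fix_nb _ _ _ (g (3 * q + 1))).
- by apply: g_neq; lia.
- exact: stepA.
- apply: sw; have e : (3 * q + 1).+1 = 3 * q + 2 by lia. by rewrite e in h1.
Qed.

Lemma stepC q : 3 * q + 2 < N -> phi (g (3 * q)) = g (3 * q).
Proof.
move=> h.
have h0 := @Px2 (3 * q) (2 * q) ltac:(rewrite /m; lia) ltac:(aat).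
apply: (@fix_nb _ _ _ (g (3 * q + 1))).
- by apply: g_neq; lia.
- exact: stepA.
- by rewrite addn1.
Qed.

Lemma stepD : N %% 3 = 2 -> phi (g (N - 2)) = g (N - 2).
Proof.
move=> r.
have hm : m.-1 < m by rewrite /m; lia.
have ha : aa m.-1 = N - 3.
  rewrite /aa ifT //; apply/andP; split; apply/eqP; rewrite /m; lia.
have h0 := Px2 hm ha.
apply: (@fix_nb _ _ _ (g (N - 3))).
- by apply: g_neq; lia.
- have -> : N - 3 = 3 * (N %/ 3 - 1) + 2 by lia.
  by apply: stepB; lia.
- have e : (N - 3).+1 = N - 2 by lia.
  by rewrite e in h0; apply: sw.
Qed.

Lemma fixall v : v < N - 1 -> phi (g v) = g v.
Proof.
move=> h.
have : v %% 3 < 3 by rewrite ltn_mod.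
case E: (v %% 3) => [|[|[|k]]] // _.
- case: (ltnP (3 * (v %/ 3) + 2) N) => h'.
    by rewrite (_ : v = 3 * (v %/ 3)); [apply: stepC | lia].
  have r : N %% 3 = 2 by lia.
  by rewrite (_ : v = N - 2); [apply: stepD | lia].
- by rewrite (_ : v = 3 * (v %/ 3) + 1); [apply: stepA; lia | lia].
- by rewrite (_ : v = 3 * (v %/ 3) + 2); [apply: stepB; lia | lia].
Qed.

Lemma phi1 : phi = 1%g.
Proof.
have fx (w : 'I_N) : w < N - 1 -> phi w = w.
  by move=> h; have := fixall h; rewrite /g inord_val.
apply/permP => w; rewrite perm1.
case: (ltnP w (N - 1)) => h; first exact: fx.
case: (ltnP (phi w) (N - 1)) => h2.
  by have := fx _ h2 => /perm_inj.
by apply: val_inj => /=; have := ltn_ord w; have := ltn_ord (phi w); lia.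
Qed.
End Upper.

Lemma T0_det n' : 2 < n'.+1 -> edge_determiningb (@complete_rel n'.+1) (T0 n').
Proof.
move=> HN; apply/andP; split; first exact: T0_sub.
apply/forallP => phi; apply/implyP => /andP[_ /forallP H]; apply/eqP.
apply: phi1 => // u v uvT; apply/eqP.
by have := H u => /forallP /(_ v) /implyP; apply.
Qed.


Lemma arith a b : 2 * a <= 3 * b + 2 -> (2 * a) %/ 3 <= b.
Proof. lia. Qed.

Lemma bigmin_leq (I : finType) (P : pred I) (F : I -> nat) x j :
  P j -> \big[minn/x]_(i | P i) F i <= F j.
Proof.
move=> Pj; rewrite unlock /=.
have : j \in index_enum I by rewrite /index_enum -enumT mem_enum.
elim: (index_enum I) => [//|k s IH] /=.
rewrite inE => /orP[/eqP <-|/IH h]; first by rewrite Pj geq_minl.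
by case: (P k) => //; apply: leq_trans (geq_minr _ _) h.
Qed.

Theorem theorem8 (n : nat) : 2 < n -> det_index (@complete_rel n) = (2 * n) %/ 3.
Proof.
case: n => [//|n'] HN.
have Hed : edge_determiningb (@complete_rel n'.+1) (edges (@complete_rel n'.+1)).
  apply/andP; split; first exact: subxx.
  apply/forallP => phi; apply/implyP => /andP[_ /forallP H]; apply/eqP.
  apply: (detP (T0_det HN)) => u v uvT.
  have uvE := subsetP (T0_sub HN) _ uvT.
  by apply/eqP; have := H u => /forallP /(_ v) /implyP; apply.
have low T : edge_determiningb (@complete_rel n'.+1) T -> (2 * n'.+1) %/ 3 <= #|T|.
  move=> HT; apply: arith; exact: lower HT.
apply/eqP; rewrite eqn_leq; apply/andP; split.
  rewrite /det_index; apply: leq_trans (@bigmin_leq _ _ (fun T : {set {set 'I_n'.+1}} => #|T|) _ _ (T0_det HN)) _ => /=.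
  apply: leq_trans (leq_imset_card _ _) _.
  by rewrite card_ord.
rewrite /det_index; apply: (big_ind (fun x => (2 * n'.+1) %/ 3 <= x)).
- exact: low.
- by move=> x y hx hy; rewrite leq_min hx hy.
- exact: low.
Qed.
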